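(* Let $B_1,B_2$ be compact curves of genus at least two, $g$ the genus of $B_2$, and let $\mathcal A=(D_1\cup\dots\cup D_{m+1},d,\{(t_i,r_i,n_i)\}_{i=1}^{m+1})$ be a simple Galois admissible configuration for $B_1\times B_2$ with $m\le4(g-1)$. Let $\mathcal A'=(D_1\cup\dots\cup D_m,d,\{(t_i,r_i,n_i)\}_{i=1}^{m})$ be obtained by omitting the last component. Then $\nu(\mathcal A')<\nu(\mathcal A)$.
   Context: A simple Galois admissible configuration for $B_1\times B_2$ consists of: pairwise disjoint curves $D_1,\dots,D_k\subset B_1\times B_2$, each the graph of an étale map $B_1\to B_2$; a positive integer $d$; and for each $i$ positive integers $t_i,n_i$ and $r_i\ge2$ with $d=t_in_ir_i$. Its abstract slope is $$\nu(\mathcal A)=2+\frac{-\sum_{i=1}^k t_in_i\frac{(r_i-1)(r_i+1)}{r_i}e(D_i)}{d\,e(B_1\times B_2)-\sum_{i=1}^k t_in_i(r_i-1)e(D_i)},$$ where $e$ denotes topological Euler characteristic; equivalently $\nu(\mathcal A)=2+\dfrac{1-\frac1k\sum_i r_i^{-2}}{\frac{2g-2}{k}+1-\frac1k\sum_i r_i^{-1}}$ with $g$ the genus of $B_2$. *)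

(* Defs.v *)
From mathcomp Require Import all_boot all_order all_algebra.
Set Implicit Arguments. Unset Strict Implicit. Unset Printing Implicit Defensive.
Import Order.TTheory GRing.Theory Num.Theory.
Local Open Scope ring_scope.

Definition euler_curve (g : nat) : int := 2%:Z - (2 * g)%:Z.

(* Numerical data of a simple Galois admissible configuration for B1 x B2,
   with g1, g2 the genera of B1, B2, k components D_0,...,D_(k-1),
   eD i = e(D_i).  Each D_i is the graph of an etale map B1 -> B2, hence
   D_i is isomorphic to B1 (eD i = e(B1)) and, by Riemann-Hurwitz for an
   etale map of some degree deg >= 1, e(B1) = deg * e(B2). *)
Definition sga_config (g1 g2 k d : nat) (t n r : nat -> nat) (eD : nat -> int)
  : Prop :=
  (0 < d)%N /\
  forall i, (i < k)%N ->
    [/\ d = (t i * n i * r i)%N, (0 < t i)%N, (0 < n i)%N & (2 <= r i)%N] /\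
    eD i = euler_curve g1 /\
        (exists2 deg : nat, (0 < deg)%N & euler_curve g1 = (deg%:Z * euler_curve g2)%R).

(* Abstract slope nu(A), first formula of the paper, with
   e(B1 x B2) = e(B1) e(B2). *)
Definition abstract_slope (g1 g2 k d : nat) (t n r : nat -> nat) (eD : nat -> int)
  : rat :=
  let eX : rat := ((euler_curve g1)%:~R * (euler_curve g2)%:~R) in
  2 + (- \sum_(i < k) ((t i * n i)%:R
                       * ((((r i)%:R - 1) * ((r i)%:R + 1)) / (r i)%:R)
                       * (eD i)%:~R))
      / (d%:R * eX - \sum_(i < k) ((t i * n i)%:R * ((r i)%:R - 1) * (eD i)%:~R)).

(* Main.v *)
Require Import Defs.
From mathcomp Require Import all_boot all_order all_algebra.
From mathcomp Require Import ring lra zify.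
Import Order.TTheory GRing.Theory Num.Theory.
Local Open Scope ring_scope.

Lemma slope_eq (g1 g2 k d : nat) (t n r : nat -> nat) (eD : nat -> int) :
  (2 <= g1)%N -> (2 <= g2)%N -> (0 < d)%N ->
  (forall i, (i < k)%N -> d = (t i * n i * r i)%N /\ (2 <= r i)%N /\ eD i = euler_curve g1) ->
  abstract_slope g1 g2 k d t n r eD =
  2 + (\sum_(i < k) (1 - ((r i)%:R^-1)^+2)) /
      ((2 * g2)%:R - 2 + \sum_(i < k) (1 - (r i)%:R^-1) : rat).
Proof.
move=> hg1 hg2 hd H.
rewrite /abstract_slope.
set E : rat := (euler_curve g1)%:~R.
set e2 : rat := (euler_curve g2)%:~R.
have E0 : E < 0.
  rewrite /E /euler_curve rmorphB /=. rewrite -!pmulrn. idtac "GOAL". Show.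
  have : (4%:R <= (2 * g1)%:R :> rat) by rewrite ler_nat; lia.
  rewrite natrM; lra.
have e2E : e2 = 2 - (2 * g2)%:R.
  by rewrite /e2 /euler_curve rmorphB /= -!pmulrn.
have d0 : (0 : rat) < d%:R by rewrite ltr0n.
have h1 : \sum_(i < k) ((t i * n i)%:R * ((((r i)%:R - 1) * ((r i)%:R + 1)) / (r i)%:R)
                       * (eD i)%:~R)
   = d%:R * E * \sum_(i < k) (1 - ((r i)%:R^-1)^+2) :> rat.
  rewrite mulr_sumr; apply: eq_bigr => i _.
  have [Hd [Hr He]] := H i (ltn_ord i).
  rewrite He -/E.
  have r0 : (r i)%:R != 0 :> rat by rewrite pnatr_eq0; lia.
  have -> : (d%:R : rat) = (t i * n i)%:R * (r i)%:R by rewrite Hd natrM.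
  by field.
have h2 : \sum_(i < k) ((t i * n i)%:R * ((r i)%:R - 1) * (eD i)%:~R)
   = d%:R * E * \sum_(i < k) (1 - (r i)%:R^-1) :> rat.
  rewrite mulr_sumr; apply: eq_bigr => i _.
  have [Hd [Hr He]] := H i (ltn_ord i).
  rewrite He -/E.
  have r0 : (r i)%:R != 0 :> rat by rewrite pnatr_eq0; lia.
  have -> : (d%:R : rat) = (t i * n i)%:R * (r i)%:R by rewrite Hd natrM.
  by field.
rewrite h1 h2 -/e2 e2E.
congr (_ + _).
have dE : d%:R * E != 0 :> rat by rewrite mulf_neq0 //; [apply: lt0r_neq0 | apply: ltr0_neq0].
set A := \sum_(i < k) _.
set B := \sum_(i < k) _.
have hg : (4%:R <= (2 * g2)%:R :> rat) by rewrite ler_nat; lia.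
have B0 : 0 <= B.
  apply: sumr_ge0 => i _.
  have [_ [Hr _]] := H i (ltn_ord i).
  rewrite subr_ge0 invf_le1 ?ler1n ?ltr0n; lia.
have den : (2 * g2)%:R - 2 + B != 0 :> rat by apply: lt0r_neq0; lra.
rewrite -mulNr.
have den2 : 2 - (2 * g2)%:R - B != 0 :> rat by apply: ltr0_neq0; lra.
have dE1 : d%:R != 0 :> rat by apply: lt0r_neq0.
have E1 : E != 0 by apply: ltr0_neq0.
field; apply/andP; split; first by rewrite -natrM.
rewrite -/E -natrM.
have -> : d%:R * (E * (2 - (2 * g2)%:R)) - d%:R * E * B = d%:R * E * (2 - (2 * g2)%:R - B) by ring.
by rewrite mulf_neq0.
Qed.

Theorem lemma5p7 (g1 g2 m d : nat) (t n r : nat -> nat) (eD : nat -> int) :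
  (2 <= g1)%N -> (2 <= g2)%N ->
  sga_config g1 g2 m.+1 d t n r eD ->
  (m <= 4 * (g2 - 1))%N ->
  abstract_slope g1 g2 m d t n r eD < abstract_slope g1 g2 m.+1 d t n r eD.
Proof.
move=> hg1 hg2 [hd Hc] hm.
have H1 : forall i, (i < m.+1)%N ->
    d = (t i * n i * r i)%N /\ (2 <= r i)%N /\ eD i = euler_curve g1.
  by move=> i /Hc [[? ? ? ?] [? _]].
have H0 : forall i, (i < m)%N ->
    d = (t i * n i * r i)%N /\ (2 <= r i)%N /\ eD i = euler_curve g1.
  by move=> i hi; apply: H1; apply: ltnW.
rewrite (@slope_eq _ _ _ _ _ _ _ _ hg1 hg2 hd H0) (@slope_eq _ _ _ _ _ _ _ _ hg1 hg2 hd H1) ltrD2l.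
rewrite !big_ord_recr /=.
set A := \sum_(i < m) _.
set B := \sum_(i < m) _.
set G : rat := (2 * g2)%:R - 2.
set x : rat := (r m)%:R^-1.
have [_ [Hrm _]] := H1 m (ltnSn m).
have x0 : 0 < x by rewrite /x invr_gt0 ltr0n; lia.
have x1 : x <= 2^-1.
  rewrite /x lef_pV2 ?posrE ?ltr0n; try lia.
  by rewrite ler_nat.
have hx : forall i : 'I_m, 0 < (r i)%:R^-1 :> rat /\ (r i)%:R^-1 <= 1 :> rat.
  move=> i; have [_ [Hr _]] := H0 i (ltn_ord i).
  split; first (rewrite invr_gt0 ltr0n; lia).
  rewrite invf_le1; [rewrite ler1n|rewrite ltr0n]; lia.
have B0 : 0 <= B.
  apply: sumr_ge0 => i _; have [_ ?] := hx i; lra.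
have A0 : 0 <= A.
  apply: sumr_ge0 => i _; have [? ?] := hx i.
  rewrite subr_ge0 expr2; nra.
have AB : A <= B + m%:R / 4.
  have -> : m%:R / 4 = \sum_(i < m) (4^-1 : rat).
    by rewrite sumr_const card_ord -mulr_natl; field.
  rewrite /B -big_split /=; apply: ler_sum => i _.
  set y := (r i)%:R^-1; have := sqr_ge0 (y - 2^-1); rewrite expr2; have [? ?] := hx i; nra.
have hG : m%:R / 4 <= G / 2.
  have : (m + 4 <= 4 * g2)%N by lia.
  rewrite -(ler_nat rat) natrD natrM /G natrM; lra.
have G0 : 2 <= G.
  have : (4 <= 2 * g2)%N by lia.
  rewrite -(ler_nat rat) /G; lra.
have hd1 : 0 < G + B by lra.
have hd2 : 0 < G + (B + (1 - x)) by lra.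
rewrite -subr_lt0.
have -> : A / (G + B) - (A + (1 - x ^+ 2)) / (G + (B + (1 - x)))
   = (A * (1 - x) - (1 - x ^+ 2) * (G + B)) / ((G + B) * (G + (B + (1 - x)))).
  by field; rewrite !lt0r_neq0.
rewrite pmulr_llt0 ?invr_gt0 ?mulr_gt0 //.
have p1 : 0 < (1 - x) * (G + B - A) by apply: mulr_gt0; lra.
have p2 : 0 <= x * (1 - x) * (G + B) by apply: mulr_ge0; [apply: mulr_ge0|]; lra.
have -> : 1 - x ^+ 2 = (1 + x) * (1 - x) by rewrite expr2; ring.
have -> : A * (1 - x) - (1 + x) * (1 - x) * (G + B) = - ((1 - x) * (G + B - A)) - x * (1 - x) * (G + B) by ring.
lra.
Qed.
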